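(* Let $k,r\geq 1$, let $1\le d\le r$, and let $I_d\subseteq\{1,\dots,r\}$ with $|I_d|=d$. Then for every $n\geq k$, $$\Bigl|S_n^{(r)}\Bigl(\bigcup_{m=1}^{k}T_{k,r}^m(I_d)\Bigr)\Bigr|=r^{k-1}(r-d)^{n+1-k}\,n!.$$
   Context: For $n,r\ge1$, $S_n^{(r)}$ denotes the set of coloured permutations of length $n$ with $r$ colours: sequences $\phi=(\phi_1,\dots,\phi_n)$ where $\phi_i=a_i^{(c_i)}$, $(a_1,\dots,a_n)$ is a permutation of $\{1,\dots,n\}$ and each $c_i\in\{1,\dots,r\}$ is the colour of $a_i$. For $\phi=(\tau_1^{(s_1)},\dots,\tau_k^{(s_k)})\in S_k^{(r)}$ and $\psi=(\alpha_1^{(v_1)},\dots,\alpha_n^{(v_n)})\in S_n^{(r)}$, an occurrence of $\phi$ in $\psi$ is a sequence of indices $1\le i_1<\dots<i_k\le n$ such that $(\alpha_{i_1},\dots,\alpha_{i_k})$ is order-isomorphic to $(\tau_1,\dots,\tau_k)$ and $v_{i_j}=s_j$ for all $j$. $\psi$ contains $\phi$ if there is at least one occurrence, and avoids $\phi$ otherwise. For a set $T$ of coloured patterns, $S_n^{(r)}(T)$ is the set of $\psi\in S_n^{(r)}$ avoiding every $\phi\in T$. For $I_d\subseteq\{1,\dots,r\}$ with $|I_d|=d$ and $1\le m\le k$, $T_{k,r}^m(I_d)$ is the set of all $\phi\in S_k^{(r)}$ whose first entry is $\phi_1=m^{(c)}$ for some colour $c\in I_d$. *)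

(* Defs.v *)
From mathcomp Require Import all_boot perm.
Set Implicit Arguments. Unset Strict Implicit. Unset Printing Implicit Defensive.

(* Coloured permutations of length n with r colours.
   Position i : 'I_n (0-based), value (p.1 i) : 'I_n (value a_i = val + 1),
   colour (p.2 i) : 'I_r (colour c_i = val + 1). *)
Definition cperm (n r : nat) : finType :=
  ({perm 'I_n} * {ffun 'I_n -> 'I_r})%type.

Definition occurrence (k n r : nat) (phi : cperm k r) (psi : cperm n r)
    (f : {ffun 'I_k -> 'I_n}) : bool :=
  [forall j1 : 'I_k, forall j2 : 'I_k, (j1 < j2) ==> (f j1 < f j2)] &&
  [forall j1 : 'I_k, forall j2 : 'I_k,
      (phi.1 j1 < phi.1 j2) == (psi.1 (f j1) < psi.1 (f j2))] &&
  [forall j : 'I_k, psi.2 (f j) == phi.2 j].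

Definition contains (k n r : nat) (psi : cperm n r) (phi : cperm k r) : bool :=
  [exists f : {ffun 'I_k -> 'I_n}, occurrence phi psi f].

Definition avoids (k n r : nat) (psi : cperm n r) (phi : cperm k r) : bool :=
  ~~ contains psi phi.

Definition avoiders (n k r : nat) (T : {set cperm k r}) : {set cperm n r} :=
  [set psi : cperm n r | [forall phi in T, avoids psi phi]].

(* T_{k,r}^m(I): patterns whose first entry is m^{(c)} with c in I.
   m is 1-based, colours in I are 0-based ('I_r codes colour c as c-1). *)
Definition Tkrm (k r m : nat) (I : {set 'I_r}) : {set cperm k r} :=
  [set phi : cperm k r | [exists j : 'I_k,
      (val j == 0) && (val (phi.1 j) == m.-1) && (phi.2 j \in I)]].

Arguments Tkrm k r m I : clear implicits.
Arguments avoiders n k r T : clear implicits.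

(* Main.v *)
Require Import Defs.
From mathcomp Require Import all_boot perm.
From mathcomp Require Import zify.
Lemma prod_split (a b N M : nat) : 0 < M <= N ->
  \prod_(0 <= i < N) (if i + M <= N then a else b) = a ^ (N - M).+1 * b ^ M.-1.
Proof.
move=> /andP [HM0 HM].
rewrite (@big_cat_nat nat 1 muln (N - M).+1 0 N) //; last by lia.
rewrite (@eq_big_nat _ _ _ 0 (N - M).+1 _ (fun _ => a)); last first.
  by move=> i /andP [_ Hi]; rewrite ifT //; lia.
rewrite (@eq_big_nat _ _ _ (N - M).+1 N _ (fun _ => b)); last first.
  by move=> i /andP [Hi _]; rewrite ifF //; apply/negbTE; rewrite -ltnNge; lia.
rewrite !prod_nat_const_nat subn0; congr (_ * _); congr (_ ^ _); lia.
Qed.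

Section Aux.
Variables (k r n : nat) (I : {set 'I_r}).

Local Notation U := (\bigcup_(1 <= m < k.+2) Tkrm k.+1 r m I).

Lemma memU (phi : cperm k.+1 r) : (phi \in U) = (phi.2 ord0 \in I).
Proof.
rewrite (big_morph (fun A : {set cperm k.+1 r} => phi \in A) (in_setU phi) (in_set0 phi)).
rewrite big_has; apply/hasP/idP.
- case=> m _; rewrite inE => /existsP [j /andP [/andP [/eqP j0 _] Hc]].
  by have -> : ord0 = j by apply/val_inj.
- move=> H; exists (phi.1 ord0).+1.
    by rewrite mem_index_iota /= ltnS ltn_ord.
  rewrite inE; apply/existsP; exists ord0; by rewrite /= eqxx H.
Qed.

Lemma avoidP (psi : cperm n.+1 r) :
  (psi \in avoiders n.+1 k.+1 r U) =
  [forall i : 'I_n.+1, (i + k.+1 <= n.+1) ==> (psi.2 i \notin I)].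
Proof.
apply/idP/idP.
- move=> Hav; apply/forallP => i; apply/implyP => Hi; apply/negP => HI.
  move: Hav; rewrite inE => /forallP Hav.
  pose f : {ffun 'I_k.+1 -> 'I_n.+1} := [ffun j : 'I_k.+1 => inord (i + j)].
  have fv : forall j : 'I_k.+1, nat_of_ord (f j) = i + j.
    move=> j; rewrite ffunE inordK //.
    by apply: leq_trans Hi; rewrite ltn_add2l.
  pose g := fun j => psi.1 (f j).
  have ginj : injective g.
    move=> j1 j2 /perm_inj /(congr1 (@nat_of_ord _)); rewrite !fv => /addnI; exact: val_inj.
  pose A := fun j => [set j' | g j' < g j].
  have rklt : forall j, #|A j| < k.+1.
    move=> j; suff : A j \proper [set: 'I_k.+1].
      by move/proper_card; rewrite cardsT card_ord.
    apply/properP; split; first exact: subsetT.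
    by exists j; rewrite ?inE // ltnn.
  have rkmono : forall j1 j2, g j1 < g j2 -> #|A j1| < #|A j2|.
    move=> j1 j2 H; apply: proper_card; apply/properP; split.
      by apply/subsetP => x; rewrite !inE => Hx; apply: ltn_trans H.
    by exists j1; rewrite !inE ?ltnn.
  pose rk := fun j => Ordinal (rklt j).
  have rkinj : injective rk.
    move=> j1 j2 /(congr1 val) /= E.
    case: (ltngtP (g j1) (g j2)) => H.
    + by move: (rkmono _ _ H); rewrite E ltnn.
    + by move: (rkmono _ _ H); rewrite E ltnn.
    + by apply: ginj; apply: val_inj.
  pose phi : cperm k.+1 r := (perm rkinj, [ffun j => psi.2 (f j)]).
  have f0 : f ord0 = i by apply: val_inj; rewrite /= fv addn0.
  have := Hav phi; rewrite memU /= ffunE f0 HI /= => /negP; apply.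
  apply/existsP; exists f; apply/andP; split; first (apply/andP; split).
  + apply/forallP => j1; apply/forallP => j2; apply/implyP => H.
    by rewrite !fv ltn_add2l.
  + apply/forallP => j1; apply/forallP => j2; rewrite !permE /=.
    case: (ltngtP (g j1) (g j2)) => H.
    * by rewrite (rkmono _ _ H).
    * by rewrite ltnNge ltnW // (rkmono _ _ H).
    * have -> : j1 = j2 by apply: ginj; apply: val_inj.
      by rewrite !ltnn.
  + by apply/forallP => j; rewrite /phi /= !ffunE.
- move/forallP => H; rewrite inE; apply/forallP => phi; apply/implyP.
  rewrite memU => Hphi; apply/negP => /existsP [f /andP [/andP [Hinc _] Hcol]].
  have Hc : psi.2 (f ord0) \in I by rewrite (eqP (forallP Hcol ord0)).
  have key : forall j (Hj : j < k.+1), f ord0 + j <= f (Ordinal Hj).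
    elim=> [|j IH] Hj.
      by rewrite addn0; have -> : ord0 = Ordinal Hj by apply: val_inj.
    have Hj' : j < k.+1 by apply: ltnW.
    rewrite addnS; apply: leq_ltn_trans (IH Hj') _.
    have := forallP (forallP Hinc (Ordinal Hj')) (Ordinal Hj).
    by move/implyP; apply.
  have := key k (ltnSn k); rewrite -ltnS => Hk.
  have Hb : f ord0 + k.+1 <= n.+1.
    by rewrite addnS; apply: leq_trans Hk _; rewrite ltnS -ltnS ltn_ord.
  by have := implyP (H (f ord0)) Hb; rewrite Hc.
Qed.

End Aux.

Theorem mainTheorem3 (k r d : nat) (I : {set 'I_r}) (n : nat) :
  1 <= k -> 1 <= r -> 1 <= d <= r -> #|I| = d -> k <= n ->
  #|avoiders n k r (\bigcup_(1 <= m < k.+1) Tkrm k r m I)| =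
    r ^ (k - 1) * (r - d) ^ (n + 1 - k) * n`!.
Proof.
case: k => [//|k] _ _ _ HI.
case: n => [//|n] Hkn.
pose F := fun i : 'I_n.+1 =>
  if i + k.+1 <= n.+1 then [pred x : 'I_r | x \notin I] else predT.
have E : avoiders n.+1 k.+1 r (\bigcup_(1 <= m < k.+2) Tkrm k.+1 r m I)
         = setX [set: {perm 'I_n.+1}] [set c | c \in family F].
  apply/setP => -[p c]; rewrite avoidP !inE /=.
  apply/forallP/forallP => H i; have := H i; rewrite /F /=;
    by case: ifP => //= _; move/implyP => // ->.
rewrite E cardsX cardsT card_Sn.
have -> : #|[set c | c \in family F]| = #|family F| by apply: eq_card => c; rewrite inE.
rewrite card_family foldrE big_image /=.
have cF : forall i : 'I_n.+1, #|F i| =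
   if i + k.+1 <= n.+1 then r - d else r.
  move=> i; rewrite /F; case: ifP => _.
  by rewrite -HI -[X in _ = X - _]card_ord -(cardC I) addKn.
  by rewrite -[RHS]card_ord; apply: eq_card.
rewrite (eq_bigr _ (fun i _ => cF i)).
rewrite -(big_mkord xpredT (fun i => if i + k.+1 <= n.+1 then r - d else r)).
rewrite prod_split; last by apply/andP; split.
rewrite mulnC; congr (_ * _); rewrite mulnC; congr (_ * _); congr (_ ^ _); lia.
Qed.
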